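(* Let $H\subset\mathbb{R}^n$ be a smooth bounded domain, $c\in L^\infty(H)$, and let $u\in C^2(H)\cap C(\overline H)$ satisfy $D_{H,\varphi}u+c(x)u\ge0$ in $H$, $u\ge0$ in $H$, and $u=\varphi$ on $\partial H$, where $\varphi\ge0$ on $\partial H$. Then either $u>0$ in $H$ or $u\equiv0$ in $H$.
   Context: For an open set $H\subset\mathbb{R}^n$, a function $\varphi$ on $\partial H$ and $u$ on $\overline H$ with $u=\varphi$ on $\partial H$, let $v$ be the bounded harmonic function in $\Omega=H\times(0,\infty)$, continuous up to the boundary, with $v(x,0)=u(x)$ for $x\in H$ and $v(x,\lambda)=\varphi(x)$ on $\partial H\times[0,\infty)$. Define $D_{H,\varphi}u(x):=-\partial_\lambda v(x,0)$ for $x\in H$. *)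

(* Defs.v *)
From Stdlib Require Import Reals.
From mathcomp Require Import all_boot.
Set Implicit Arguments. Unset Strict Implicit. Unset Printing Implicit Defensive.
Open Scope R_scope.

Definition Rn (n : nat) := 'I_n -> R.

Definition vsub n (x y : Rn n) : Rn n := fun i => x i - y i.
Definition norm n (x : Rn n) : R := sqrt (\big[Rplus/0]_(i < n) (x i * x i)).
Definition dist n (x y : Rn n) : R := norm (vsub x y).

Definition shift n (x : Rn n) (i : 'I_n) (t : R) : Rn n :=
  fun j => if j == i then x j + t else x j.

(* the point (x, l) of R^(n+1), last coordinate l *)
Definition ext n (x : Rn n) (l : R) : Rn n.+1 :=
  fun j => match unlift ord_max j with Some i => x i | None => l end.

Section Topo.
Variable n : nat.
Implicit Types (S U : Rn n -> Prop) (f : Rn n -> R).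

Definition is_open U := forall x, U x -> exists r, 0 < r /\ forall y, dist x y < r -> U y.
Definition clos S (x : Rn n) := forall r, 0 < r -> exists y, S y /\ dist x y < r.
Definition boundary S (x : Rn n) := clos S x /\ ~ S x.
Definition bounded S := exists M, forall x, S x -> norm x <= M.
Definition connected S := forall U V, is_open U -> is_open V ->
  (forall x, S x -> U x \/ V x) -> (forall x, S x -> U x -> V x -> False) ->
  (forall x, S x -> U x) \/ (forall x, S x -> V x).

Definition cont_on S f := forall x, S x -> forall eps, 0 < eps ->
  exists delta, 0 < delta /\ forall y, S y -> dist x y < delta -> Rabs (f y - f x) < eps.

Definition pderiv_at f (i : 'I_n) (x : Rn n) (l : R) :=
  derivable_pt_lim (fun t => f (shift x i t)) 0 l.

Definition C2_on U f (d1 : 'I_n -> Rn n -> R) (d2 : 'I_n -> 'I_n -> Rn n -> R) :=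
  cont_on U f /\
  (forall i x, U x -> pderiv_at f i x (d1 i x)) /\
  (forall i, cont_on U (d1 i)) /\
  (forall i j x, U x -> pderiv_at (d1 i) j x (d2 i j x)) /\
  (forall i j, cont_on U (d2 i j)).

Definition C2 U f := exists d1 d2, C2_on U f d1 d2.

Fixpoint Ck (k : nat) f : Prop :=
  match k with
  | O => cont_on (fun _ => True) f
  | S k => cont_on (fun _ => True) f /\
           forall i, exists g, (forall x, pderiv_at f i x (g x)) /\ Ck k g
  end.
Definition smooth f := forall k, Ck k f.

(* smooth bounded domain: nonempty, open, connected, bounded, and C^infty boundary,
   i.e. locally H = {rho < 0} with rho smooth and grad rho <> 0 on {rho = 0}. *)
Definition smooth_bounded_domain S :=
  (exists x, S x) /\ is_open S /\ connected S /\ bounded S /\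
  forall p, boundary S p -> exists r rho, 0 < r /\ smooth rho /\
    (forall x, dist p x < r -> (S x <-> rho x < 0)) /\
    (forall x, dist p x < r -> rho x = 0 ->
        exists i l, pderiv_at rho i x l /\ l <> 0).

Definition harmonic_on U f := exists d1 d2, C2_on U f d1 d2 /\
  forall x, U x -> \big[Rplus/0]_(i < n) d2 i i x = 0.
End Topo.

Definition cyl n (H : Rn n -> Prop) (y : Rn n.+1) : Prop :=
  exists x l, y = ext x l /\ H x /\ 0 < l.

Definition harm_ext n (H : Rn n -> Prop) (phi u : Rn n -> R) (v : Rn n.+1 -> R) :=
  harmonic_on (cyl H) v /\
  (exists M, forall y, cyl H y -> Rabs (v y) <= M) /\
  cont_on (clos (cyl H)) v /\
  (forall x, H x -> v (ext x 0) = u x) /\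
  (forall x l, boundary H x -> 0 <= l -> v (ext x l) = phi x).

Definition dlam0 n (v : Rn n.+1 -> R) (x : Rn n) (L : R) :=
  forall eps, 0 < eps -> exists delta, 0 < delta /\ forall h, 0 < h < delta ->
    Rabs ((v (ext x h) - v (ext x 0)) / h - L) < eps.

(* D_{H,phi} u (x) = d : there is the harmonic extension v and -d_l v(x,0) = d *)
Definition DN n (H : Rn n -> Prop) (phi u : Rn n -> R) (x : Rn n) (d : R) :=
  exists v, harm_ext H phi u v /\ dlam0 v x (- d).

(* Main.v *)
Require Import Defs.
From Stdlib Require Import Reals Lra Lia Psatz ClassicalEpsilon FunctionalExtensionality Classical.
From mathcomp Require Import all_boot.
From HB Require Import structures.
From Coquelicot Require Import Coquelicot.
Import Defs.
Set Implicit Arguments. Unset Strict Implicit. Unset Printing Implicit Defensive.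
Open Scope R_scope.

HB.instance Definition _ := Monoid.isComLaw.Build R 0 Rplus (fun a b c => esym (Rplus_assoc a b c)) Rplus_comm Rplus_0_l.

Notation sumR n F := (\big[Rplus/0]_(i < n) F i).

Lemma sum_ge0 n (F : 'I_n -> R) : (forall i, 0 <= F i) -> 0 <= sumR n F.
Proof. move=> H; apply: (big_ind (fun x => 0 <= x)) => //; [lra| move=> *; lra]. Qed.

Lemma sum_le n (F G : 'I_n -> R) : (forall i, F i <= G i) -> sumR n F <= sumR n G.
Proof. move=> H; apply: (big_ind2 (fun x y => x <= y)) => //; [lra| move=> *; lra]. Qed.

Lemma sum_plus n (F G : 'I_n -> R) : sumR n (fun i => F i + G i) = sumR n F + sumR n G.
Proof. by rewrite big_split. Qed.

Lemma sum_scal n c (F : 'I_n -> R) : sumR n (fun i => c * F i) = c * sumR n F.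
Proof.
elim/big_rec2: _ => [|i x y _ ->]; [ring|ring].
Qed.

Lemma sum_const n c : sumR n (fun _ => c) = INR n * c.
Proof.
elim: n => [|n IH]; first by rewrite big_ord0 /=; ring.
rewrite S_INR big_ord_recr /= IH; ring.
Qed.

Lemma sum_ext n (F G : 'I_n -> R) : (forall i, F i = G i) -> sumR n F = sumR n G.
Proof. move=> H; exact: eq_bigr. Qed.

Lemma sum_term n (F : 'I_n -> R) i : (forall j, 0 <= F j) -> F i <= sumR n F.
Proof.
move=> H; rewrite (bigD1 i) //=.
rewrite -{1}(Rplus_0_r (F i)); apply: Rplus_le_compat_l.
apply: (big_ind (fun x => 0 <= x)) => //; [lra| move=> *; lra].
Qed.

Lemma sum_split1 n (F : 'I_n -> R) i :
  sumR n F = F i + \big[Rplus/0]_(j < n | j != i) F j.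
Proof. by rewrite (bigD1 i). Qed.

Definition sq n (x : Rn n) := sumR n (fun i => x i * x i).

Lemma sq_ge0 n (x : Rn n) : 0 <= sq x.
Proof. apply: sum_ge0 => i; exact: Rle_0_sqr. Qed.

Lemma norm_sq n (x : Rn n) : norm x = sqrt (sq x).
Proof. by []. Qed.

Lemma norm_ge0 n (x : Rn n) : 0 <= norm x.
Proof. apply: sqrt_pos. Qed.

Lemma norm_sqr n (x : Rn n) : norm x * norm x = sq x.
Proof. rewrite /norm sqrt_sqrt //; exact: sq_ge0. Qed.

Lemma coord_le_norm n (x : Rn n) i : Rabs (x i) <= norm x.
Proof.
rewrite /norm -sqrt_Rsqr_abs; apply: sqrt_le_1_alt.
rewrite /Rsqr; apply: (sum_term (F := fun i => x i * x i)) => j; nra.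
Qed.

Lemma cauchy_schwarz n (a b : 'I_n -> R) :
  sumR n (fun i => a i * b i) * sumR n (fun i => a i * b i) <=
  sumR n (fun i => a i * a i) * sumR n (fun i => b i * b i).
Proof.
set A := sumR n (fun i => a i * a i).
set B := sumR n (fun i => a i * b i).
set C := sumR n (fun i => b i * b i).
have key : forall t, 0 <= A * t * t + 2 * B * t + C.
  move=> t.
  have -> : A * t * t + 2 * B * t + C = sumR n (fun i => (a i * t + b i) * (a i * t + b i)).
    rewrite /A /B /C.
    have -> : sumR n (fun i => (a i * t + b i) * (a i * t + b i)) =
       sumR n (fun i => t * t * (a i * a i) + (2 * t * (a i * b i) + b i * b i)).
      apply: sum_ext => i; ring.
    rewrite !sum_plus !sum_scal; ring.
  apply: sum_ge0 => i; exact: Rle_0_sqr.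
have A0 : 0 <= A by apply: sum_ge0 => i; exact: Rle_0_sqr.
case: (Rle_lt_or_eq_dec 0 A A0) => HA.
  have := key (- B / A). move=> h.
  have : 0 <= (A * (- B / A) * (- B / A) + 2 * B * (- B / A) + C) * A by nra.
  have -> : (A * (- B / A) * (- B / A) + 2 * B * (- B / A) + C) * A = A * C - B * B.
    field; lra.
  lra.
have HB : B = 0.
  apply: NNPP => hB.
  have := key (- (C + 1) / (2 * B)).
  rewrite -HA.
  have -> : 0 * (- (C + 1) / (2 * B)) * (- (C + 1) / (2 * B)) + 2 * B * (- (C + 1) / (2 * B)) + C = -1.
    field; lra.
  lra.
rewrite HB -HA; lra.
Qed.

Lemma norm_triangle_gen n (a b : 'I_n -> R) :
  sqrt (sumR n (fun i => (a i + b i) * (a i + b i))) <=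
  sqrt (sumR n (fun i => a i * a i)) + sqrt (sumR n (fun i => b i * b i)).
Proof.
set A := sumR n (fun i => a i * a i).
set B := sumR n (fun i => a i * b i).
set C := sumR n (fun i => b i * b i).
have A0 : 0 <= A by apply: sum_ge0 => i; exact: Rle_0_sqr.
have C0 : 0 <= C by apply: sum_ge0 => i; exact: Rle_0_sqr.
have E : sumR n (fun i => (a i + b i) * (a i + b i)) = A + 2 * B + C.
  rewrite /A /B /C.
  have -> : sumR n (fun i => (a i + b i) * (a i + b i)) =
       sumR n (fun i => a i * a i + (2 * (a i * b i) + b i * b i)).
    apply: sum_ext => i; ring.
  rewrite !sum_plus sum_scal; ring.
have CS := cauchy_schwarz a b. rewrite -/A -/B -/C in CS.
have sA := sqrt_sqrt A A0. have sC := sqrt_sqrt C C0.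
have pA := sqrt_pos A. have pC := sqrt_pos C.
have HB : B <= sqrt A * sqrt C.
  have h : B * B <= (sqrt A * sqrt C) * (sqrt A * sqrt C) by nra.
  have : 0 <= sqrt A * sqrt C by nra.
  nra.
have E0 : 0 <= A + 2 * B + C by rewrite -E; apply: sum_ge0 => i; exact: Rle_0_sqr.
rewrite E; apply: Rsqr_incr_0_var; last by lra.
rewrite /Rsqr sqrt_sqrt //; nra.
Qed.

Lemma dist_eq n (x y : Rn n) : dist x y = sqrt (sumR n (fun i => (x i - y i) * (x i - y i))).
Proof. by []. Qed.

Lemma dist_ge0 n (x y : Rn n) : 0 <= dist x y.
Proof. apply: sqrt_pos. Qed.

Lemma dist_sym n (x y : Rn n) : dist x y = dist y x.
Proof. rewrite !dist_eq; f_equal; apply: sum_ext => i; ring. Qed.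

Lemma dist_refl n (x : Rn n) : dist x x = 0.
Proof.
rewrite dist_eq (sum_ext (G := fun _ => 0)) ?sum_const; last by move=> i; ring.
rewrite Rmult_0_r; exact: sqrt_0.
Qed.

Lemma dist_tri n (x y z : Rn n) : dist x z <= dist x y + dist y z.
Proof.
rewrite !dist_eq.
have := norm_triangle_gen (fun i => x i - y i) (fun i => y i - z i).
rewrite (sum_ext (F := fun i => (x i - y i + (y i - z i)) * (x i - y i + (y i - z i)))
   (G := fun i => (x i - z i) * (x i - z i))) //.
move=> i; ring.
Qed.

Lemma coord_le_dist n (x y : Rn n) i : Rabs (x i - y i) <= dist x y.
Proof. exact: (coord_le_norm (vsub x y) i). Qed.

Lemma norm_le_dist n (x y : Rn n) : norm x <= norm y + dist x y.
Proof.
have := norm_triangle_gen (fun i => y i) (fun i => x i - y i).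
rewrite (sum_ext (F := fun i => (y i + (x i - y i)) * (y i + (x i - y i)))
   (G := fun i => x i * x i)); last by move=> i; ring.
rewrite /norm /dist /norm /vsub; lra.
Qed.

Definition dist2 n (x y : Rn n) := sumR n (fun i => (x i - y i) * (x i - y i)).

Lemma dist2_ge0 n (x y : Rn n) : 0 <= dist2 x y.
Proof. apply: sum_ge0 => i; exact: Rle_0_sqr. Qed.

Lemma dist_sqrt n (x y : Rn n) : dist x y = sqrt (dist2 x y).
Proof. by []. Qed.

Lemma dist_sqr n (x y : Rn n) : dist x y * dist x y = dist2 x y.
Proof. rewrite dist_sqrt sqrt_sqrt //; exact: dist2_ge0. Qed.

Lemma ext_last n (x : Rn n) l : ext x l ord_max = l.
Proof. by rewrite /ext unlift_none. Qed.

Lemma ext_lift n (x : Rn n) l i : ext x l (lift ord_max i) = x i.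
Proof. by rewrite /ext liftK. Qed.

Definition proj n (y : Rn n.+1) : Rn n := fun i => y (lift ord_max i).

Lemma ext_proj n (y : Rn n.+1) : ext (proj y) (y ord_max) = y.
Proof.
apply: functional_extensionality => j; rewrite /ext /proj.
by case: unliftP => [j' ->|->].
Qed.

Lemma ext_inj n (x x' : Rn n) l l' : ext x l = ext x' l' -> x = x' /\ l = l'.
Proof.
move=> E; split.
  apply: functional_extensionality => i.
  by rewrite -(ext_lift x l i) -(ext_lift x' l' i) E.
by rewrite -(ext_last x l) -(ext_last x' l') E.
Qed.

Lemma sum_last n (F : 'I_n.+1 -> R) :
  sumR n.+1 F = sumR n (fun i => F (lift ord_max i)) + F ord_max.
Proof.
rewrite big_ord_recr /=; congr (_ + _); apply: eq_bigr => i _.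
congr F; apply: val_inj => /=; by rewrite /bump leqNgt ltn_ord.
Qed.

Lemma dist2_ext n (x x' : Rn n) l l' :
  dist2 (ext x l) (ext x' l') = dist2 x x' + (l - l') * (l - l').
Proof. rewrite /dist2 sum_last !ext_last; congr (_ + _); apply: eq_bigr => i _; by rewrite !ext_lift. Qed.

Lemma dist_ext_le1 n (x x' : Rn n) l l' : dist x x' <= dist (ext x l) (ext x' l').
Proof. rewrite !dist_sqrt dist2_ext; apply: sqrt_le_1_alt; have := Rle_0_sqr (l - l'); rewrite /Rsqr; lra. Qed.

Lemma dist_ext_le2 n (x x' : Rn n) l l' : Rabs (l - l') <= dist (ext x l) (ext x' l').
Proof.
have := coord_le_dist (ext x l) (ext x' l') ord_max. by rewrite !ext_last.
Qed.

Lemma dist_ext_same n (x : Rn n) l l' : dist (ext x l) (ext x l') = Rabs (l - l').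
Proof.
rewrite dist_sqrt dist2_ext.
have -> : dist2 x x = 0.
  rewrite /dist2 (sum_ext (G := fun _ => 0)) ?sum_const; [ring| move=> i; ring].
rewrite Rplus_0_l -sqrt_Rsqr_abs; done.
Qed.

Lemma dist_ext_bound n (x x' : Rn n) l l' :
  dist (ext x l) (ext x' l') <= dist x x' + Rabs (l - l').
Proof.
rewrite !dist_sqrt dist2_ext.
have h1 := sqrt_pos (dist2 x x'). have h2 := Rabs_pos (l - l').
apply: Rsqr_incr_0_var; last lra.
rewrite /Rsqr sqrt_sqrt; last by have := dist2_ge0 x x'; have := Rle_0_sqr (l - l'); rewrite /Rsqr; lra.
have := sqrt_sqrt _ (dist2_ge0 x x').
have : (l - l') * (l - l') = Rabs (l - l') * Rabs (l - l').
  by rewrite -Rabs_mult Rabs_pos_eq //; exact: Rle_0_sqr.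
nra.
Qed.

Lemma shift_shift n (x : Rn n) i t s : shift (shift x i t) i s = shift x i (t + s).
Proof.
apply: functional_extensionality => j; rewrite /shift.
case: (j == i); ring.
Qed.

Lemma shift_at n (x : Rn n) i t : shift x i t i = x i + t.
Proof. by rewrite /shift eqxx. Qed.

Lemma shift_other n (x : Rn n) i t j : j != i -> shift x i t j = x j.
Proof. by rewrite /shift => /negbTE ->. Qed.

Lemma dist2_shift_l n (x z : Rn n) i t :
  dist2 (shift x i t) z = dist2 x z + 2 * t * (x i - z i) + t * t.
Proof.
rewrite /dist2 (sum_split1 _ i) (sum_split1 (fun i0 => (x i0 - z i0) * (x i0 - z i0)) i) shift_at.
have -> : \big[Rplus/0]_(j < n | j != i) ((shift x i t j - z j) * (shift x i t j - z j)) =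
          \big[Rplus/0]_(j < n | j != i) ((x j - z j) * (x j - z j)).
  by apply: eq_bigr => j hj; rewrite shift_other.
ring.
Qed.

Lemma dist_shift n (x : Rn n) i t : dist x (shift x i t) = Rabs t.
Proof.
rewrite dist_sym dist_sqrt dist2_shift_l.
have -> : dist2 x x = 0.
  rewrite /dist2 (sum_ext (G := fun _ => 0)) ?sum_const; [ring| move=> j; ring].
rewrite -sqrt_Rsqr_abs /Rsqr; f_equal; ring.
Qed.

Section Clos.
Variable n : nat.
Implicit Types (S T : Rn n -> Prop).

Lemma clos_self S x : S x -> clos S x.
Proof. move=> Sx r r0; exists x; split => //; rewrite dist_refl; lra. Qed.

Lemma clos_mono S T x : (forall y, S y -> T y) -> clos S x -> clos T x.
Proof. move=> ST cx r r0; case: (cx r r0) => y [Sy d]; exists y; split => //; exact: ST. Qed.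

Lemma clos_clos S x : clos (clos S) x -> clos S x.
Proof.
move=> cx r r0; case: (cx (r/2)) => [|y [cy d]]; first lra.
case: (cy (r/2)) => [|z [Sz d']]; first lra.
exists z; split => //; have := dist_tri x y z; lra.
Qed.

Lemma cont_on_sub S T f : cont_on T f -> (forall y, S y -> T y) -> cont_on S f.
Proof.
move=> c ST x Sx e e0; case: (c x (ST x Sx) e e0) => d [d0 h].
exists d; split => // y Sy; exact: h (ST y Sy).
Qed.
End Clos.

Lemma cyl_ext n (H : Rn n -> Prop) x l : cyl H (ext x l) <-> H x /\ 0 < l.
Proof.
split; first by case=> x' [l' [E [Hx l0]]]; case: (ext_inj E) => -> ->.
by case=> Hx l0; exists x, l.
Qed.

Lemma clos_cyl_ext n (H : Rn n -> Prop) x l : H x -> 0 <= l -> clos (cyl H) (ext x l).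
Proof.
move=> Hx l0 r r0; exists (ext x (l + r/2)); split.
  by apply/cyl_ext; split => //; lra.
rewrite dist_ext_same Rabs_left; lra.
Qed.

Lemma clos_cyl_inv n (H : Rn n -> Prop) x l : clos (cyl H) (ext x l) -> clos H x /\ 0 <= l.
Proof.
move=> c; split.
  move=> r r0; case: (c r r0) => y [[x' [l' [-> [Hx' _]]]] d].
  exists x'; split => //; have := dist_ext_le1 x x' l l'; lra.
apply: Rnot_lt_le => hl.
case: (c (- l)) => [|y [[x' [l' [-> [Hx' l'0]]]] d]]; first lra.
have := dist_ext_le2 x x' l l'; rewrite Rabs_left; lra.
Qed.

Lemma rabs_le x a : Rabs x <= a -> - a <= x <= a.
Proof. rewrite /Rabs; case: Rcase_abs => *; lra. Qed.
Lemma rabs_lt x a : Rabs x < a -> - a < x < a.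
Proof. rewrite /Rabs; case: Rcase_abs => *; lra. Qed.

Definition cv (u : nat -> R) l := forall e, 0 < e -> exists K, forall k, (K <= k)%nat -> Rabs (u k - l) < e.
Definition incr (phi : nat -> nat) := forall k, (phi k < phi k.+1)%nat.

Lemma incr_mono phi : incr phi -> forall a b, (a < b)%nat -> (phi a < phi b)%nat.
Proof.
move=> h a b; elim: b => [//|b IH]; rewrite ltnS leq_eqVlt => /orP [/eqP ->|ab]; first exact: h.
exact: ltn_trans (IH ab) (h b).
Qed.

Lemma incr_ge phi : incr phi -> forall k, (k <= phi k)%nat.
Proof. move=> h; elim=> [//|k IH]; exact: leq_ltn_trans IH (h k). Qed.

Lemma incr_comp phi psi : incr phi -> incr psi -> incr (fun k => phi (psi k)).
Proof. move=> h1 h2 k; apply: incr_mono => //; exact: h2. Qed.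

Lemma cv_sub u l phi : incr phi -> cv u l -> cv (fun k => u (phi k)) l.
Proof.
move=> hp hu e e0; case: (hu e e0) => K hK; exists K => k hk; apply: hK.
exact: leq_trans hk (incr_ge hp k).
Qed.

Lemma inv_small e : 0 < e -> exists K, forall k, (K <= k)%nat -> / (INR k + 1) < e.
Proof.
move=> e0; case: (INR_unbounded (/ e)) => K hK; exists K => k hk.
have hKk : INR K <= INR k by apply: le_INR; apply/leP.
have pK := pos_INR K.
apply: (Rle_lt_trans _ (/ (INR K + 1))).
  apply: Rinv_le_contravar; lra.
rewrite -(Rinv_inv e); apply: Rinv_lt_contravar.
  apply: Rmult_lt_0_compat; [apply: Rinv_0_lt_compat|]; lra.
lra.
Qed.

Lemma subseq1 (a : nat -> R) B : (forall k, Rabs (a k) <= B) ->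
  exists phi, incr phi /\ exists l, cv (fun k => a (phi k)) l.
Proof.
move=> hB.
have [l hl] : exists l, ValAdh a l.
  apply: (Bolzano_Weierstrass a (fun c => - B <= c <= B)); first exact: compact_P3.
  move=> k; have := hB k; move/rabs_le; lra.
have H : forall N k, exists p, (N <= p)%nat /\ Rabs (a p - l) < / (INR k + 1).
  move=> N k.
  have pos : 0 < / (INR k + 1) by apply: Rinv_0_lt_compat; have := pos_INR k; lra.
  case: (hl (disc l (mkposreal _ pos)) N) => [|p [hp hd]].
    by exists (mkposreal _ pos).
  exists p; split; first by apply/leP.
  exact: hd.
pose pick N k := proj1_sig (constructive_indefinite_description _ (H N k)).
have hpick : forall N k, (N <= pick N k)%nat /\ Rabs (a (pick N k) - l) < / (INR k + 1).
  move=> N k; exact: proj2_sig (constructive_indefinite_description _ (H N k)).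
pose phi := fix f k := match k with O => pick O O | S k' => pick (S (f k')) (S k') end.
exists phi; split.
  move=> k /=; by case: (hpick (phi k).+1 k.+1).
exists l => e e0; case: (inv_small e0) => K hK; exists K => k hk.
have : Rabs (a (phi k) - l) < / (INR k + 1) by case: k {hk} => [|k] /=; [case: (hpick 0%nat 0%nat) | case: (hpick (phi k).+1 k.+1)].
have := hK k hk; lra.
Qed.

Lemma subseqN N (y : nat -> Rn N) B : (forall k i, Rabs (y k i) <= B) ->
  exists phi, incr phi /\ exists l : Rn N, forall i, cv (fun k => y (phi k) i) (l i).
Proof.
move=> hB.
have P : forall m, exists phi, incr phi /\ exists l : Rn N, forall i : 'I_N, (i < m)%nat -> cv (fun k => y (phi k) i) (l i).
  elim=> [|m [phi [hphi [l hl]]]].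
    by exists id; split => //; exists (fun _ => 0).
  case: (ltnP m N) => hm; last first.
    exists phi; split => //; exists l => i hi; apply: hl; exact: leq_trans (ltn_ord i) hm.
  pose i0 := Ordinal hm.
  case: (subseq1 (a := fun k => y (phi k) i0) (B := B)) => [k|psi [hpsi [l0 hl0]]]; first exact: hB.
  exists (fun k => phi (psi k)); split; first exact: incr_comp.
  exists (fun i => if i == i0 then l0 else l i) => i hi.
  case: eqP => [->|ne]; first exact: hl0.
  apply: (cv_sub (u := fun k => y (phi k) i)) => //; apply: hl.
  rewrite ltnS leq_eqVlt in hi; case/orP: hi => // /eqP hi.
  by case: ne; apply: val_inj.
case: (P N) => phi [hphi [l hl]]; exists phi; split => //; exists l => i; exact: hl.
Qed.

Lemma cv_dist N (z : nat -> Rn N) (l : Rn N) : (forall i, cv (fun k => z k i) (l i)) ->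
  forall e, 0 < e -> exists K, forall k, (K <= k)%nat -> dist l (z k) < e.
Proof.
move=> h e e0.
have e1 : 0 < e / (INR N + 1) by apply: Rdiv_lt_0_compat; have := pos_INR N; lra.
have f : forall i : 'I_N, {K | forall k, (K <= k)%nat -> Rabs (z k i - l i) < e / (INR N + 1)}.
  move=> i; apply: constructive_indefinite_description; exact: h i _ e1.
exists (\max_(i < N) proj1_sig (f i)) => k hk.
have hi : forall i, Rabs (z k i - l i) < e / (INR N + 1).
  move=> i; apply: (proj2_sig (f i)); have hb : (sval (f i) <= \max_(j < N) sval (f j))%N by apply: (@leq_bigmax _ (fun j => sval (f j)) i). exact: leq_trans hb hk.
rewrite dist_sqrt; rewrite -(sqrt_Rsqr e); last lra.
apply: sqrt_lt_1_alt; split; first exact: dist2_ge0.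
apply: (Rle_lt_trans _ (INR N * ((e / (INR N + 1)) * (e / (INR N + 1))))).
  rewrite /dist2 -sum_const; apply: sum_le => i.
  have := hi i; rewrite -Rabs_Ropp Ropp_minus_distr => hh.
  have := Rabs_pos (l i - z k i).
  have : (l i - z k i) * (l i - z k i) = Rabs (l i - z k i) * Rabs (l i - z k i).
    by rewrite -Rabs_mult Rabs_pos_eq //; exact: Rle_0_sqr.
  nra.
have pN := pos_INR N.
have -> : INR N * (e / (INR N + 1) * (e / (INR N + 1))) = (e * e) * (INR N / ((INR N + 1) * (INR N + 1))).
  field; lra.
rewrite /Rsqr.
have : INR N / ((INR N + 1) * (INR N + 1)) < 1.
  have pos : 0 < (INR N + 1) * (INR N + 1) by nra.
  apply: (Rmult_lt_reg_r _ _ _ pos); rewrite /Rdiv Rmult_assoc Rinv_l; nra.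
have : 0 < e * e by nra.
nra.
Qed.

Definition closedS N (K : Rn N -> Prop) := forall x, clos K x -> K x.
Definition cbounded N (K : Rn N -> Prop) B := forall x, K x -> forall i, Rabs (x i) <= B.

Lemma limit_in N (K : Rn N -> Prop) B (y : nat -> Rn N) :
  cbounded K B -> closedS K -> (forall k, K (y k)) ->
  exists phi l, incr phi /\ K l /\ forall e, 0 < e -> exists K0, forall k, (K0 <= k)%nat -> dist l (y (phi k)) < e.
Proof.
move=> hb hc hy.
case: (subseqN (y := y) (B := B)) => [k i|phi [hphi [l hl]]]; first exact: hb.
have hd := cv_dist (z := fun k => y (phi k)) hl.
exists phi, l; split => //; split => //.
apply: hc => r r0; case: (hd r r0) => K0 hK0; exists (y (phi K0)); split => //; exact: hK0.
Qed.

Lemma evt N (K : Rn N -> Prop) B w : (exists x, K x) -> cbounded K B -> closedS K -> cont_on K w ->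
  exists x0, K x0 /\ forall x, K x -> w x0 <= w x.
Proof.
move=> [x1 Kx1] hb hc hw.
have [mb hmb] : exists mb, forall x, K x -> mb <= w x.
  apply: NNPP => hn.
  have hs : forall k : nat, exists x, K x /\ w x < - INR k.
    move=> k; apply: NNPP => hk; apply: hn; exists (- INR k) => x Kx.
    apply: Rnot_lt_le => hl; apply: hk; exists x; split => //.
  pose y k := proj1_sig (constructive_indefinite_description _ (hs k)).
  have hy : forall k, K (y k) /\ w (y k) < - INR k.
    move=> k; exact: proj2_sig (constructive_indefinite_description _ (hs k)).
  case: (limit_in hb hc (y := y)) => [k|phi [l [hphi [Kl hl]]]]; first by case: (hy k).
  case: (hw l Kl 1 Rlt_0_1) => d [d0 hd].
  case: (hl d d0) => K0 hK0.
  case: (INR_unbounded (Rabs (w l) + 1)) => K1 hK1.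
  pose k := maxn K0 K1.
  have h1 := hK0 k (leq_maxl _ _).
  have h2 := hd _ (proj1 (hy (phi k))) h1.
  have h3 := proj2 (hy (phi k)).
  have : INR K1 <= INR (phi k).
    apply: le_INR; apply/leP; exact: leq_trans (leq_maxr K0 K1) (incr_ge hphi k).
  move: h2 => /rabs_lt h2.
  have := Rle_abs (w l); have := Rabs_pos (w l).
  have := Rabs_Ropp (w l); have := Rle_abs (- w l). lra.
pose E r := exists x, K x /\ r = - w x.
have hbd : bound E by exists (- mb) => r [x [Kx ->]]; have := hmb x Kx; lra.
have hne : exists r, E r by exists (- w x1), x1.
case: (completeness E hbd hne) => M [hub hlub].
have hm : forall x, K x -> - M <= w x.
  move=> x Kx; have := hub (- w x) (ex_intro _ x (conj Kx erefl)); lra.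
have hs : forall k : nat, exists x, K x /\ w x < - M + / (INR k + 1).
  move=> k; apply: NNPP => hk.
  have pos : 0 < / (INR k + 1) by apply: Rinv_0_lt_compat; have := pos_INR k; lra.
  have : M <= M - / (INR k + 1).
    apply: hlub => r [x [Kx ->]].
    apply: Rnot_lt_le => hl; apply: hk; exists x; split => //; lra.
  lra.
pose y k := proj1_sig (constructive_indefinite_description _ (hs k)).
have hy : forall k, K (y k) /\ w (y k) < - M + / (INR k + 1).
  move=> k; exact: proj2_sig (constructive_indefinite_description _ (hs k)).
case: (limit_in hb hc (y := y)) => [k|phi [l [hphi [Kl hl]]]]; first by case: (hy k).
exists l; split => // x Kx.
suff : w l <= - M by have := hm x Kx; lra.
apply: Rnot_lt_le => hlt.
have e0 : 0 < (w l + M) / 2 by lra.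
case: (hw l Kl _ e0) => d [d0 hd].
case: (hl d d0) => K0 hK0.
case: (inv_small e0) => K1 hK1.
pose k := maxn K0 K1.
have h1 := hK0 k (leq_maxl _ _).
have h2 := hd _ (proj1 (hy (phi k))) h1.
have h3 := proj2 (hy (phi k)).
have h4 := hK1 (phi k) (leq_trans (leq_maxr K0 K1) (incr_ge hphi k)).
move: h2 => /rabs_lt h2.
lra.
Qed.

Lemma div_nonneg a b : 0 <= a -> 0 < b -> 0 <= a / b.
Proof. move=> a0 b0; apply: Rmult_le_pos => //; apply: Rlt_le; exact: Rinv_0_lt_compat. Qed.

Lemma small_pos a b : 0 < a -> 0 < b -> exists t, 0 < t /\ t < a /\ t < b.
Proof.
move=> a0 b0; exists (Rmin a b / 2).
have := Rmin_pos a b a0 b0; have := Rmin_l a b; have := Rmin_r a b.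
move=> *; split; [lra|split; lra].
Qed.

Lemma min_1d (g h : R -> R) d a : 0 < d -> (forall t, Rabs t < d -> g 0 <= g t) ->
  (forall t, Rabs t < d -> derivable_pt_lim g t (h t)) -> derivable_pt_lim h 0 a -> 0 <= a.
Proof.
move=> d0 hmin hg hh.
have h00 : h 0 = 0.
  have hg0 := hg 0 ltac:(rewrite Rabs_R0; lra).
  case: (Rtotal_order (h 0) 0) => [hneg|[//|hpos]].
  - case: (hg0 (- h 0) ltac:(lra)) => del hdel.
    case: (small_pos d0 (cond_pos del)) => t [ht ht2].
    have := hdel t ltac:(lra) ltac:(rewrite Rabs_pos_eq; lra).
    have hm := hmin t ltac:(rewrite Rabs_pos_eq; lra).
    rewrite Rplus_0_l => /rabs_lt hq.
    have : 0 <= (g t - g 0) / t by apply: div_nonneg; lra.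
    lra.
  - case: (hg0 (h 0) ltac:(lra)) => del hdel.
    case: (small_pos d0 (cond_pos del)) => t' [ht' ht2'].
    set t := - t'.
    have ht : t < 0 by rewrite /t; lra.
    have ht2 : - t < d /\ - t < del by rewrite /t; split; lra.
    have := hdel t ltac:(lra) ltac:(rewrite Rabs_left; lra).
    have hm := hmin t ltac:(rewrite Rabs_left; lra).
    rewrite Rplus_0_l => /rabs_lt hq.
    have : (g t - g 0) / t <= 0.
      have -> : (g t - g 0) / t = - ((g t - g 0) / (- t)) by field; lra.
      have : 0 <= (g t - g 0) / (- t) by apply: div_nonneg; lra.
      lra.
    lra.
apply: Rnot_lt_le => ha.
case: (hh (- a / 2) ltac:(lra)) => del hdel.
have hneg : forall t, 0 < t -> t < del -> h t < 0.
  move=> t t0 tl; have := hdel t ltac:(lra) ltac:(rewrite Rabs_pos_eq; lra).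
  rewrite Rplus_0_l h00 Rminus_0_r => /rabs_lt hq.
  have : h t / t < 0 by lra.
  move=> hq'; have : h t = (h t / t) * t by field; lra.
  move=> ->; nra.
case: (small_pos d0 (cond_pos del)) => t1 [ht ht2].
case: (MVT_cor2 g h 0 t1 ht) => [c hc|c [hc1 hc2]].
  apply: hg; rewrite Rabs_pos_eq; lra.
have := hmin t1 ltac:(rewrite Rabs_pos_eq; lra).
have := hneg c ltac:(lra) ltac:(lra).
nra.
Qed.

Lemma dpl_shift f t l : derivable_pt_lim (fun s => f (t + s)) 0 l -> derivable_pt_lim f t l.
Proof.
move=> h e e0; case: (h e e0) => del hd; exists del => hh h0 hl.
have := hd hh h0 hl; by rewrite Rplus_0_l Rplus_0_r.
Qed.

Definition lapdata N (D : Rn N -> Prop) (w : Rn N -> R) (d1 d2 : 'I_N -> Rn N -> R) :=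
  (forall i y, D y -> pderiv_at w i y (d1 i y)) /\ (forall i y, D y -> pderiv_at (d1 i) i y (d2 i y)).

Lemma local_min_lap N (w : Rn N -> R) d1 d2 y r : 0 < r ->
  (forall y', dist y y' < r -> w y <= w y' /\ forall i, pderiv_at w i y' (d1 i y')) ->
  (forall i, pderiv_at (d1 i) i y (d2 i y)) -> 0 <= sumR N (fun i => d2 i y).
Proof.
move=> r0 hb h2; apply: sum_ge0 => i.
apply: (min_1d (g := fun t => w (shift y i t)) (h := fun t => d1 i (shift y i t)) (d := r)) => //.
- move=> t ht.
  have -> : shift y i 0 = y by apply: functional_extensionality => j; rewrite /shift; case: (j == i); ring.
  apply: (proj1 (hb _ _)); by rewrite dist_shift.
- move=> t ht; apply: dpl_shift.
  have := proj2 (hb (shift y i t) ltac:(by rewrite dist_shift)) i.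
  rewrite /pderiv_at; apply: derivable_pt_lim_ext => s /=; by rewrite shift_shift.
- exact: h2.
Qed.

Lemma minP N (D : Rn N -> Prop) B w d1 d2 : is_open D -> cbounded (clos D) B -> cont_on (clos D) w ->
  lapdata D w d1 d2 -> (forall y, D y -> sumR N (fun i => d2 i y) < 0) ->
  (forall y, clos D y -> ~ D y -> 0 <= w y) -> forall y, D y -> 0 <= w y.
Proof.
move=> ho hb hw [hl1 hl2] hneg hbd y0 Dy0.
apply: Rnot_lt_le => hy0.
case: (evt (K := clos D) (B := B) (w := w)) => //.
- exists y0; exact: clos_self.
- move=> x cx; exact: clos_clos.
move=> x0 [cx0 hx0].
have := hx0 y0 (clos_self Dy0).
case: (classic (D x0)) => Dx0; last by have := hbd x0 cx0 Dx0; lra.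
move=> _.
case: (ho x0 Dx0) => r [r0 hr].
have := local_min_lap (w := w) (d1 := d1) (d2 := d2) (y := x0) r0.
have := hneg x0 Dx0.
move=> hn hm; suff : 0 <= sumR N (fun i => d2 i x0) by lra.
apply: hm.
  move=> y' hy'; split; first by apply: hx0; apply: clos_self; exact: hr.
  move=> i; apply: hl1; exact: hr.
move=> i; exact: hl2.
Qed.

Lemma cpt_eps h x : continuity_pt h x -> forall e, 0 < e -> exists d, 0 < d /\ forall y, Rabs (y - x) < d -> Rabs (h y - h x) < e.
Proof.
move=> c e e0; case: (c e e0) => d [d0 hd]; exists d; split => // y hy.
case: (Req_dec x y) => [<-|ne]; first by rewrite Rminus_diag Rabs_R0.
exact: (hd y (conj (conj I ne) hy)).
Qed.

Lemma dpl_cont f x l : derivable_pt_lim f x l -> forall e, 0 < e -> exists d, 0 < d /\ forall y, Rabs (y - x) < d -> Rabs (f y - f x) < e.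
Proof. move=> h; apply: cpt_eps; apply: derivable_continuous_pt; exact: (exist _ l h). Qed.

Section Cont.
Variable N : nat.
Implicit Types (A : Rn N -> Prop) (f g : Rn N -> R).

Lemma cont_on_plus A f g : cont_on A f -> cont_on A g -> cont_on A (fun y => f y + g y).
Proof.
move=> cf cg x Ax e e0.
case: (cf x Ax (e/2) ltac:(lra)) => d1 [d10 h1]; case: (cg x Ax (e/2) ltac:(lra)) => d2 [d20 h2].
case: (small_pos d10 d20) => d [d0 [dd1 dd2]]; exists d; split => // y Ay hy.
have := h1 y Ay ltac:(lra); have := h2 y Ay ltac:(lra).
have -> : f y + g y - (f x + g x) = (f y - f x) + (g y - g x) by ring.
have := Rabs_triang (f y - f x) (g y - g x); lra.
Qed.

Lemma cont_on_comp A f (h : R -> R) : cont_on A f -> (forall s, exists l, derivable_pt_lim h s l) -> cont_on A (fun y => h (f y)).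
Proof.
move=> cf hh x Ax e e0.
case: (hh (f x)) => l hl; case: (dpl_cont hl e0) => d1 [d10 h1].
case: (cf x Ax d1 d10) => d [d0 hd]; exists d; split => // y Ay hy.
exact: h1 (hd y Ay hy).
Qed.

Lemma cont_on_const A c : cont_on A (fun _ => c).
Proof. move=> x Ax e e0; exists 1; split; [lra|move=> y _ _; rewrite Rminus_diag Rabs_R0; lra]. Qed.

Lemma cont_on_scal A c f : cont_on A f -> cont_on A (fun y => c * f y).
Proof.
move=> cf; apply: (cont_on_comp (h := fun s => c * s)) => // s; exists c.
apply is_derive_Reals; auto_derive => //; ring.
Qed.

Lemma cont_on_coord A j : cont_on A (fun y => y j).
Proof.
move=> x Ax e e0; exists e; split => // y _ hy.
rewrite -Rabs_Ropp Ropp_minus_distr; have := coord_le_dist x y j; lra.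
Qed.

Lemma cont_on_dist A z : cont_on A (fun y => dist y z).
Proof.
move=> x Ax e e0; exists e; split => // y _ hy.
have := dist_tri y x z; have := dist_tri x y z; rewrite (dist_sym y x).
move=> ? ?; apply: Rabs_def1; lra.
Qed.

Lemma cont_on_dist2 A z : cont_on A (fun y => dist2 y z).
Proof.
have -> : (fun y => dist2 y z) = (fun y => (fun s => s * s) (dist y z)).
  by apply: functional_extensionality => y; rewrite dist_sqr.
apply: (cont_on_comp (h := fun s => s * s) (f := fun y => dist y z)); first exact: cont_on_dist.
move=> s; exists (2 * s); apply is_derive_Reals; auto_derive => //; ring.
Qed.
End Cont.

Section Lap.
Variable N : nat.
Implicit Types (D : Rn N -> Prop) (w : Rn N -> R).

Lemma pderiv_plus f g i x a b : pderiv_at f i x a -> pderiv_at g i x b -> pderiv_at (fun y : Rn N => f y + g y) i x (a + b).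
Proof. move=> ha hb; exact: (derivable_pt_lim_plus _ _ _ _ _ ha hb). Qed.

Lemma pderiv_scal f i x a c : pderiv_at f i x a -> pderiv_at (fun y : Rn N => c * f y) i x (c * a).
Proof. move=> ha; exact: (derivable_pt_lim_scal _ _ _ _ ha). Qed.

Lemma lap_plus D w1 w2 d1 d2 e1 e2 : lapdata D w1 d1 d2 -> lapdata D w2 e1 e2 ->
  lapdata D (fun y => w1 y + w2 y) (fun i y => d1 i y + e1 i y) (fun i y => d2 i y + e2 i y).
Proof.
move=> [a1 a2] [b1 b2]; split => i y Dy.
  exact: pderiv_plus (a1 i y Dy) (b1 i y Dy).
exact: pderiv_plus (a2 i y Dy) (b2 i y Dy).
Qed.

Lemma lap_scal D w d1 d2 c : lapdata D w d1 d2 ->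
  lapdata D (fun y => c * w y) (fun i y => c * d1 i y) (fun i y => c * d2 i y).
Proof.
move=> [a1 a2]; split => i y Dy.
  exact: pderiv_scal (a1 i y Dy).
exact: pderiv_scal (a2 i y Dy).
Qed.

Lemma lap_const D c : lapdata D (fun _ => c) (fun _ _ => 0) (fun _ _ => 0).
Proof. split => i y _; rewrite /pderiv_at; apply: derivable_pt_lim_const. Qed.

Lemma lap_sub D w d1 d2 D' : lapdata D w d1 d2 -> (forall y, D' y -> D y) -> lapdata D' w d1 d2.
Proof. move=> [a1 a2] h; split => i y Dy; [exact: a1 (h _ Dy)|exact: a2 (h _ Dy)]. Qed.

Lemma lap_coord D j : lapdata D (fun y => y j) (fun i _ => if j == i then 1 else 0) (fun _ _ => 0).
Proof.
split => i y _; rewrite /pderiv_at.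
  rewrite /shift; case: (j == i).
    apply is_derive_Reals; auto_derive => //; ring.
  apply: derivable_pt_lim_const.
apply: derivable_pt_lim_const.
Qed.

Lemma lap_dist2 D z : lapdata D (fun y => dist2 y z) (fun i y => 2 * (y i - z i)) (fun _ _ => 2).
Proof.
split => i y _; rewrite /pderiv_at.
  apply: (derivable_pt_lim_ext (fun t => dist2 y z + 2 * t * (y i - z i) + t * t)); first by move=> t /=; rewrite dist2_shift_l.
  apply is_derive_Reals; auto_derive => //; ring.
apply: (derivable_pt_lim_ext (fun t => 2 * (y i + t - z i))); first by move=> t /=; rewrite shift_at.
apply is_derive_Reals; auto_derive => //; ring.
Qed.

Lemma lap_expb D z al : lapdata D (fun y => exp (- al * dist2 y z))
  (fun i y => - 2 * al * (y i - z i) * exp (- al * dist2 y z))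
  (fun i y => (4 * al * al * (y i - z i) * (y i - z i) - 2 * al) * exp (- al * dist2 y z)).
Proof.
split => i y _; rewrite /pderiv_at.
  apply: (derivable_pt_lim_ext (fun t => exp (- al * (dist2 y z + 2 * t * (y i - z i) + t * t)))); first by move=> t /=; rewrite dist2_shift_l.
  apply is_derive_Reals; auto_derive => //.
  have -> : dist2 y z + 2 * 0 * (y i - z i) + 0 * 0 = dist2 y z by ring.
  ring.
apply: (derivable_pt_lim_ext (fun t => - 2 * al * (y i + t - z i) * exp (- al * (dist2 y z + 2 * t * (y i - z i) + t * t)))); first by move=> t /=; rewrite dist2_shift_l shift_at.
apply is_derive_Reals; auto_derive => //.
have -> : dist2 y z + 2 * 0 * (y i - z i) + 0 * 0 = dist2 y z by ring.
ring.
Qed.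
End Lap.

Lemma sum_lap_expb N (y z : Rn N) al :
  sumR N (fun i => (4 * al * al * (y i - z i) * (y i - z i) - 2 * al) * exp (- al * dist2 y z)) =
  (4 * al * al * dist2 y z - 2 * al * INR N) * exp (- al * dist2 y z).
Proof.
have -> : sumR N (fun i => (4 * al * al * (y i - z i) * (y i - z i) - 2 * al) * exp (- al * dist2 y z)) =
  sumR N (fun i => (exp (- al * dist2 y z) * (4 * al * al)) * ((y i - z i) * (y i - z i)) + (- 2 * al * exp (- al * dist2 y z))).
  apply: sum_ext => i; ring.
rewrite sum_plus sum_scal sum_const /dist2; ring.
Qed.

Lemma dist_lt_sq N (y z : Rn N) a : 0 <= a -> (dist2 y z < a * a <-> dist y z < a).
Proof.
move=> a0; rewrite -dist_sqr; have := dist_ge0 y z; split => h; nra.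
Qed.

Lemma dist_le_sq N (y z : Rn N) a : 0 <= a -> (dist2 y z <= a * a <-> dist y z <= a).
Proof.
move=> a0; rewrite -dist_sqr; have := dist_ge0 y z; split => h; nra.
Qed.

Lemma neg_mul_lt al a b : 0 < al -> a < b -> - al * b < - al * a.
Proof. move=> *; nra. Qed.
Lemma sq_lt a b : 0 <= a -> a < b -> a * a < b * b.
Proof. move=> *; nra. Qed.

Lemma exp_lt_iff a b : a < b -> exp a < exp b.
Proof. exact: exp_increasing. Qed.

Section Annulus.
Variable N : nat.
Variables (Om C : Rn N -> Prop) (v : Rn N -> R) (d1 d2 : 'I_N -> Rn N -> R).
Hypothesis hlap : lapdata Om v d1 d2.
Hypothesis hharm : forall y, Om y -> sumR N (fun i => d2 i y) = 0.
Hypothesis hcont : cont_on C v.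
Hypothesis hpos : forall y, C y -> 0 <= v y.

Definition alph rho := (INR N + 1) / (rho * rho).
Definition gb (z : Rn N) rho R (y : Rn N) := (exp (- alph rho * dist2 y z) - exp (- alph rho * (R * R))) /
  (exp (- alph rho * (rho * rho)) - exp (- alph rho * (R * R))).

Lemma annulus z rho R m : 0 < rho -> rho < R -> 0 < m ->
  (forall y, dist y z < R -> Om y) -> (forall y, dist y z <= R -> C y) ->
  (forall y, dist y z <= rho -> m <= v y) ->
  forall y, rho < dist y z < R -> m * gb z rho R y <= v y.
Proof.
move=> r0 rR m0 hOm hC hm.
set al := alph rho.
have al0 : 0 < al by rewrite /al /alph; apply: Rdiv_lt_0_compat; [have := pos_INR N|]; nra.
set ER := exp (- al * (R * R)).
set Cd := exp (- al * (rho * rho)) - ER.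
have Cd0 : 0 < Cd.
  rewrite /Cd /ER; have : exp (- al * (R * R)) < exp (- al * (rho * rho)) by apply: exp_increasing; apply: neg_mul_lt => //; apply: sq_lt; lra.
  lra.
pose c1 := - m / Cd.
pose c0 := m * ER / Cd.
have c10 : c1 < 0 by rewrite /c1; have := Rdiv_lt_0_compat m Cd m0 Cd0; rewrite /Rdiv; lra.
pose D y := rho < dist y z < R.
pose w y := (v y + c1 * exp (- al * dist2 y z)) + c0.
have hw : forall y, w y = v y - m * gb z rho R y.
  move=> y; rewrite /w /gb /c1 /c0 -/al -/ER -/Cd; field; lra.
have hDOm : forall y, D y -> Om y by move=> y [_ h]; exact: hOm.
have hclosD : forall y, clos D y -> rho <= dist y z <= R.
  move=> y cy; split; apply: Rnot_lt_le => h.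
  - case: (cy (rho - dist y z) ltac:(lra)) => y' [[h1 h2] h3].
    have := dist_tri y' y z; rewrite (dist_sym y' y); lra.
  - case: (cy (dist y z - R) ltac:(lra)) => y' [[h1 h2] h3].
    have := dist_tri y y' z; lra.
suff key : forall y, D y -> 0 <= w y.
  move=> y hy; have := key y hy; rewrite hw; lra.
apply: (minP (B := norm z + R + 1) (d1 := fun i y => (d1 i y + c1 * (- 2 * al * (y i - z i) * exp (- al * dist2 y z))) + 0)
  (d2 := fun i y => (d2 i y + c1 * ((4 * al * al * (y i - z i) * (y i - z i) - 2 * al) * exp (- al * dist2 y z))) + 0)).
- move=> y [h1 h2].
  case: (small_pos (Rlt_Rminus _ _ h1) (Rlt_Rminus _ _ h2)) => r [rp [ra rb]].
  exists r; split => // y' hy'; rewrite /D.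
  have := dist_tri y' y z; have := dist_tri y y' z; rewrite (dist_sym y' y); split; lra.
- move=> y cy i; have [_ h] := hclosD y cy.
  have := coord_le_dist y z i; have := coord_le_norm z i.
  move=> ha hb; have := Rabs_triang (y i - z i) (z i).
  have -> : y i - z i + z i = y i by ring. lra.
- have hexp : forall s, exists l, derivable_pt_lim exp s l.
    move=> s; exists (exp s); exact: derivable_pt_lim_exp.
  have c2 := cont_on_scal c1 (cont_on_comp (cont_on_scal (- al) (@cont_on_dist2 N (clos D) z)) hexp).
  have c3 : cont_on (clos D) v.
    apply: (cont_on_sub hcont) => y cy; apply: hC; by case: (hclosD y cy).
  exact: (cont_on_plus (cont_on_plus c3 c2) (@cont_on_const N (clos D) c0)).
- apply: lap_plus; last exact: lap_const.
  apply: lap_plus; first exact: lap_sub hlap hDOm.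
  apply: lap_scal; exact: lap_expb.
- move=> y Dy.
  rewrite (sum_ext (G := fun i => d2 i y + c1 * ((4 * al * al * (y i - z i) * (y i - z i) - 2 * al) * exp (- al * dist2 y z)))); last by move=> i; ring.
  rewrite sum_plus hharm ?sum_scal; last exact: hDOm.
  rewrite sum_lap_expb.
  have : 0 < (4 * al * al * dist2 y z - 2 * al * INR N) * exp (- al * dist2 y z).
    apply: Rmult_lt_0_compat; last exact: exp_pos.
    have : rho * rho < dist2 y z by case: Dy => h _; rewrite -dist_sqr; nra.
    have : al * (rho * rho) = INR N + 1 by rewrite /al /alph; field; lra.
    have := pos_INR N. nra.
  nra.
- move=> y cy nDy; rewrite hw.
  have [h1 h2] := hclosD y cy.
  case: (Rle_lt_or_eq_dec _ _ h1) => h1'; last first.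
    have -> : gb z rho R y = 1.
      rewrite /gb -/al -/ER -dist_sqr -h1'; field; move: Cd0; rewrite /Cd; lra.
    have := hm y ltac:(lra); lra.
  case: (Rle_lt_or_eq_dec _ _ h2) => h2'; first by case: nDy; split.
  have -> : gb z rho R y = 0.
    by rewrite /gb -/al -dist_sqr h2' Rminus_diag /Rdiv Rmult_0_l.
  have := hpos (hC y ltac:(lra)); lra.
Qed.

Lemma gb_pos z rho R y : 0 < rho -> rho < R -> dist y z < R -> 0 < gb z rho R y.
Proof.
move=> r0 rR hy; rewrite /gb.
set al := alph rho.
have al0 : 0 < al by rewrite /al /alph; apply: Rdiv_lt_0_compat; [have := pos_INR N|]; nra.
apply: Rdiv_lt_0_compat.
  have : exp (- al * (R * R)) < exp (- al * dist2 y z).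
    apply: exp_increasing; rewrite -dist_sqr; apply: neg_mul_lt => //; apply: sq_lt => //; exact: dist_ge0.
  lra.
have : exp (- al * (R * R)) < exp (- al * (rho * rho)) by apply: exp_increasing; apply: neg_mul_lt => //; apply: sq_lt; lra.
lra.
Qed.

Lemma propagate z R y : 0 < R -> (forall y', dist y' z < R -> Om y') -> (forall y', dist y' z <= R -> C y') ->
  0 < v z -> dist y z < R -> 0 < v y.
Proof.
move=> R0 hOm hC vz hy.
have Cz : C z by apply: hC; rewrite dist_refl; lra.
case: (@hcont z Cz (v z / 2) ltac:(lra)) => d [d0 hd].
case: (small_pos d0 R0) => rho [rp [rd rR]].
have hm : forall y', dist y' z <= rho -> v z / 2 <= v y'.
  move=> y' hy'; have := hd y' (hC y' ltac:(lra)) ltac:(rewrite dist_sym; lra).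
  move/rabs_lt; lra.
case: (Rle_lt_dec (dist y z) rho) => h.
  have := hm y h; lra.
have := annulus (m := v z / 2) rp rR ltac:(lra) hOm hC hm (conj h hy).
have := gb_pos rp rR hy.
move=> ? ?; nra.
Qed.

Lemma hopf_bound z rho R y h : 0 < rho -> 0 < h -> rho < R - h -> dist y z = R - h ->
  exp (- alph rho * (R * R)) * alph rho * R * h /
  (exp (- alph rho * (rho * rho)) - exp (- alph rho * (R * R))) <= gb z rho R y.
Proof.
move=> r0 h0 hr hy; rewrite /gb -dist_sqr hy.
set al := alph rho.
have al0 : 0 < al by rewrite /al /alph; apply: Rdiv_lt_0_compat; [have := pos_INR N|]; nra.
have Cd0 : 0 < exp (- al * (rho * rho)) - exp (- al * (R * R)).
  have : exp (- al * (R * R)) < exp (- al * (rho * rho)) by apply: exp_increasing; apply: neg_mul_lt => //; apply: sq_lt; lra.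
  lra.
rewrite /Rdiv; apply: Rmult_le_compat_r; first by apply: Rlt_le; apply: Rinv_0_lt_compat.
have -> : exp (- al * ((R - h) * (R - h))) = exp (- al * (R * R)) * exp (al * (2 * R * h - h * h)).
  rewrite -exp_plus; f_equal; ring.
have : 1 + al * (2 * R * h - h * h) <= exp (al * (2 * R * h - h * h)).
  case: (Req_dec (al * (2 * R * h - h * h)) 0) => e.
    rewrite e exp_0; lra.
  apply: Rlt_le; exact: exp_ineq1.
move=> hx.
have E0 := exp_pos (- al * (R * R)).
have hh : 0 <= h * (R - h) by apply: Rmult_le_pos; lra.
have h1 : al * R * h <= al * (2 * R * h - h * h).
  have := Rmult_le_pos _ _ (Rlt_le _ _ al0) hh; lra.
have h2 := Rmult_le_compat_l _ _ _ (Rlt_le _ _ E0) h1.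
have h3 := Rmult_le_compat_l _ _ _ (Rlt_le _ _ E0) hx.
lra.
Qed.
End Annulus.

Definition z0 N : Rn N := fun _ => 0.
Arguments z0 : clear implicits.

Lemma z0_ext n : ext (z0 n) 0 = z0 n.+1.
Proof. apply: functional_extensionality => j; rewrite /ext /z0; by case: unliftP. Qed.

Lemma dist2_z0 n (x : Rn n) : dist2 x (z0 n) = norm x * norm x.
Proof. rewrite norm_sqr /dist2 /sq /z0; apply: sum_ext => i; ring. Qed.

Lemma clos_norm n (H : Rn n -> Prop) Mh x : (forall x, H x -> norm x <= Mh) -> clos H x -> norm x <= Mh + 1.
Proof.
move=> hb cx; case: (cx 1 Rlt_0_1) => x' [Hx' d].
have := norm_le_dist x x'; have := hb x' Hx'; lra.
Qed.

Lemma harm_lap n (H : Rn n -> Prop) (v : Rn n.+1 -> R) : harmonic_on (cyl H) v ->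
  exists d1 d2, lapdata (cyl H) v d1 d2 /\ forall y, cyl H y -> sumR n.+1 (fun i => d2 i y) = 0.
Proof.
case=> d1 [d2 [[_ [h1 [_ [h2 _]]]] hs]].
exists d1, (fun i y => d2 i i y); split => //; split => i y Hy; [exact: h1|exact: h2].
Qed.

Lemma is_open_cyl n (H : Rn n -> Prop) L : is_open H ->
  is_open (fun y : Rn n.+1 => cyl H y /\ y ord_max < L).
Proof.
move=> hHo y [[x [l [-> [Hx l0]]]] hL]; rewrite ext_last in hL.
case: (hHo x Hx) => r1 [r10 hr1].
case: (small_pos r10 l0) => r2 [r20 [r2r1 r2l]].
case: (small_pos r20 (Rlt_Rminus _ _ hL)) => r [r0 [rr2 rL]].
exists r; split => // y' hy'.
rewrite -(ext_proj y') in hy' *.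
have := dist_ext_le1 x (proj y') l (y' ord_max); have := dist_ext_le2 x (proj y') l (y' ord_max).
move=> ha hb; move/rabs_lt: (Rle_lt_trans _ _ _ ha hy') => hc.
split; last by rewrite ext_last; lra.
apply/cyl_ext; split; last lra.
apply: hr1; lra.
Qed.

Section CylPos.
Variables (n : nat) (H : Rn n -> Prop) (phi u : Rn n -> R) (v : Rn n.+1 -> R).
Hypothesis hHb : bounded H.
Hypothesis hHo : is_open H.
Hypothesis hu : forall x, H x -> 0 <= u x.
Hypothesis hphi : forall x, boundary H x -> 0 <= phi x.
Hypothesis hv : harm_ext H phi u v.

Lemma cyl_pos_aux x0 l0 eps : H x0 -> 0 < l0 -> 0 < eps ->
  exists K, forall del, 0 < del -> - eps * l0 - del * K <= v (ext x0 l0).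
Proof.
move=> Hx0 l00 e0.
case: hv => hharm [[Mv hMv] [hcont [hbot hside]]].
case: hHb => Mh hMh.
case: (harm_lap hharm) => d1 [d2 [hlap hsum]].
have Mv0 : 0 <= Mv by have := hMv _ (proj2 (cyl_ext H x0 l0) (conj Hx0 l00)); have := Rabs_pos (v (ext x0 l0)); lra.
have Mh0 : 0 <= Mh by have := hMh x0 Hx0; have := norm_ge0 x0; lra.
set L := Mv / eps + l0 + 1.
have hL : eps * L = Mv + eps * (l0 + 1) by rewrite /L; field; lra.
have L0 : 0 < L by rewrite /L; have := div_nonneg Mv0 e0; lra.
set K := (Mh + 1) * (Mh + 1) + L * L.
exists K => del d0.
pose D (y : Rn n.+1) := cyl H y /\ y ord_max < L.
pose w (y : Rn n.+1) := (v y + eps * y ord_max) + (del * K + (- del) * dist2 y (z0 n.+1)).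
have hclosD : forall y, clos D y -> exists x l, y = ext x l /\ clos H x /\ 0 <= l <= L.
  move=> y cy; exists (proj y), (y ord_max); rewrite ext_proj; split => //.
  have cy' : clos (cyl H) (ext (proj y) (y ord_max)).
    rewrite ext_proj; apply: clos_mono cy; by move=> y' [].
  have [c1 c2] := clos_cyl_inv cy'; split => //; split => //.
  apply: Rnot_lt_le => hl; case: (cy (y ord_max - L) ltac:(lra)) => y' [[_ hy'] d].
  have := coord_le_dist y y' ord_max; move/rabs_le => hh; lra.
have hlw : lapdata D w _ _ :=
  lap_plus (lap_plus (lap_sub hlap (fun y (h : D y) => proj1 h)) (lap_scal eps (lap_coord D ord_max)))
           (lap_plus (lap_const D (del * K)) (lap_scal (- del) (lap_dist2 D (z0 n.+1)))).
have hdK : forall y, clos D y -> dist2 y (z0 n.+1) <= K.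
  move=> y cy; case: (hclosD y cy) => x [l [-> [cx hl]]].
  rewrite -z0_ext dist2_ext dist2_z0 /K.
  have := clos_norm hMh cx; have := norm_ge0 x; move=> ? ?.
  have : norm x * norm x <= (Mh + 1) * (Mh + 1) by nra.
  have : (l - 0) * (l - 0) <= L * L by nra.
  lra.
have hw0 : 0 <= w (ext x0 l0).
  apply: (minP (B := Mh + 1 + L) _ _ _ hlw).
  - exact: is_open_cyl.
  - move=> y cy j; case: (hclosD y cy) => x [l [-> [cx hl]]].
    rewrite /ext; case: unliftP => [i _|_].
      have := coord_le_norm x i; have := clos_norm hMh cx; lra.
    rewrite Rabs_pos_eq; lra.
  - have c3 : cont_on (clos D) v.
      apply: (cont_on_sub hcont) => y cy; apply: clos_mono cy; by move=> y' [].
    exact: (cont_on_plus (cont_on_plus c3 (cont_on_scal eps (@cont_on_coord _ (clos D) ord_max)))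
       (cont_on_plus (@cont_on_const _ (clos D) (del * K)) (cont_on_scal (- del) (@cont_on_dist2 _ (clos D) (z0 n.+1))))).
  - move=> y [Cy _].
    rewrite (sum_ext (G := fun i => d2 i y + (- 2 * del))); last first.
      move=> i; ring.
    rewrite sum_plus hsum // sum_const S_INR.
    have := pos_INR n; nra.
  - move=> y cy nDy.
    have hK := hdK y cy.
    case: (hclosD y cy) => x [l [ey [cx hl]]].
    rewrite /w ey ext_last -ey.
    suff : 0 <= v y + eps * l by nra.
    case: (classic (H x)) => Hx; last first.
      rewrite ey hside //; last lra.
      have := hphi (conj cx Hx); nra.
    case: (Rle_lt_or_eq_dec _ _ (proj1 hl)) => hl1; last first.
      rewrite ey -hl1 hbot //; have := hu Hx; lra.
    case: (Rle_lt_or_eq_dec _ _ (proj2 hl)) => hl2.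
      case: nDy; split; [rewrite ey; apply/cyl_ext; split => //| rewrite ey ext_last //].
    have Cy : cyl H y by rewrite ey; apply/cyl_ext; split => //; lra.
    have := hMv y Cy; move/rabs_le => hv'.
    rewrite hl2; nra.
  - split; [apply/cyl_ext; split => //| rewrite ext_last; rewrite /L; have := div_nonneg Mv0 e0; lra].
move: hw0; rewrite /w ext_last.
have := dist2_ge0 (ext x0 l0) (z0 n.+1).
nra.
Qed.

Lemma lim_del a b K : (forall del, 0 < del -> a - del * K <= b) -> a <= b.
Proof.
move=> h; apply: Rnot_lt_le => hba.
case: (Rle_lt_dec K 0) => hK.
  have := h 1 Rlt_0_1; lra.
have := h ((a - b) / (2 * K)) ltac:(apply: Rdiv_lt_0_compat; lra).
have -> : (a - b) / (2 * K) * K = (a - b) / 2 by field; lra.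
lra.
Qed.

Lemma cyl_pos_in y : cyl H y -> 0 <= v y.
Proof.
case=> x0 [l0 [-> [Hx0 l00]]].
apply: (lim_del (K := l0)) => eps e0; rewrite Rminus_0_l.
case: (cyl_pos_aux Hx0 l00 e0) => K hK.
apply: (lim_del (K := K)) => del d0; have := hK del d0; lra.
Qed.

Lemma cyl_pos y : clos (cyl H) y -> 0 <= v y.
Proof.
move=> cy; apply: Rnot_lt_le => hy.
case: hv => _ [_ [hcont _]].
case: (@hcont y cy (- v y) ltac:(lra)) => d [d0 hd].
case: (cy d d0) => y' [Cy' dy'].
have := hd y' (clos_self Cy') dy'; move/rabs_lt => h.
have := cyl_pos_in Cy'; lra.
Qed.
End CylPos.

Section Main.
Variables (n : nat) (H : Rn n -> Prop) (c u phi : Rn n -> R).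
Hypothesis hHo : is_open H.
Hypothesis hHb : bounded H.
Hypothesis hu : forall x, H x -> 0 <= u x.
Hypothesis hphi : forall x, boundary H x -> 0 <= phi x.
Hypothesis hdn : forall x, H x -> exists d, DN H phi u x d /\ d + c x * u x >= 0.

Lemma ball_cyl x0 r0 z x l t : (forall x, dist x0 x < r0 -> H x) ->
  dist (ext x0 t) z < t -> dist x0 x + t <= r0 -> z = ext x l -> True.
Proof. by []. Qed.

Lemma ball_in_cyl x0 r0 x t s : (forall x', dist x0 x' < r0 -> H x') -> 0 < s -> s <= t ->
  dist x0 x + s < r0 -> forall y, dist y (ext x t) < s -> cyl H y.
Proof.
move=> hr s0 st hx y hy; rewrite -(ext_proj y) in hy *.
have h1 := dist_ext_le1 (proj y) x (y ord_max) t.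
have h2 := dist_ext_le2 (proj y) x (y ord_max) t.
apply/cyl_ext; split.
  apply: hr; have := dist_tri x0 x (proj y); rewrite (dist_sym x (proj y)); lra.
move/rabs_lt: (Rle_lt_trans _ _ _ h2 hy); lra.
Qed.

Lemma cball_in_clos x0 r0 x t s : (forall x', dist x0 x' < r0 -> H x') -> 0 < s -> s <= t ->
  dist x0 x + s < r0 -> forall y, dist y (ext x t) <= s -> clos (cyl H) y.
Proof.
move=> hr s0 st hx y hy; rewrite -(ext_proj y) in hy *.
have h1 := dist_ext_le1 (proj y) x (y ord_max) t.
have h2 := dist_ext_le2 (proj y) x (y ord_max) t.
apply: clos_cyl_ext.
  apply: hr; have := dist_tri x0 x (proj y); rewrite (dist_sym x (proj y)); lra.
move/rabs_le: (Rle_trans _ _ _ h2 hy); lra.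
Qed.

Lemma Zopen x0 : H x0 -> u x0 = 0 -> exists del, 0 < del /\ forall x, dist x0 x < del -> H x /\ u x = 0.
Proof.
move=> Hx0 ux0.
case: (hdn Hx0) => d [[v [hv hdl]] hd].
rewrite ux0 Rmult_0_r Rplus_0_r in hd; apply Rge_le in hd.
have hvpos := cyl_pos hHb hHo hu hphi hv.
case: (hv) => hharm [_ [hcont [hbot _]]].
case: (harm_lap hharm) => d1 [d2 [hlap hsum]].
case: (@hHo x0 Hx0) => r0 [r00 hr0].
have hx00 : dist x0 x0 = 0 by exact: dist_refl.
(* Step 1: Hopf *)
have step1 : forall t, 0 < t -> t < r0 -> v (ext x0 t) = 0.
  move=> t t0 tr.
  have Cz : clos (cyl H) (ext x0 t) by apply: clos_cyl_ext => //; lra.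
  case: (Rle_lt_or_eq_dec _ _ (hvpos _ Cz)) => hz; last by [].
  exfalso.
  have hOm := ball_in_cyl hr0 (x := x0) (t := t) (s := t) t0 (Rle_refl t) ltac:(lra).
  have hC := cball_in_clos hr0 (x := x0) (t := t) (s := t) t0 (Rle_refl t) ltac:(lra).
  case: (@hcont (ext x0 t) Cz (v (ext x0 t) / 2) ltac:(lra)) => dd [dd0 hdd].
  have t20 : 0 < t / 2 by lra.
  case: (small_pos dd0 t20) => rho [rp [rd rt]].
  have hm : forall y, dist y (ext x0 t) <= rho -> v (ext x0 t) / 2 <= v y.
    move=> y hy; have := hdd y (hC y ltac:(lra)) ltac:(rewrite dist_sym; lra).
    move/rabs_lt; lra.
  have rt2 : rho < t by lra.
  have m0 : 0 < v (ext x0 t) / 2 by lra.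
  have hann := @annulus _ _ _ _ _ _ hlap hsum hcont hvpos (ext x0 t) rho t (v (ext x0 t) / 2) rp rt2 m0 hOm hC hm.
  set al := alph n.+1 rho.
  set kap := exp (- al * (t * t)) * al * t / (exp (- al * (rho * rho)) - exp (- al * (t * t))).
  have al0 : 0 < al by rewrite /al /alph; apply: Rdiv_lt_0_compat; [have := pos_INR n.+1|]; nra.
  have kap0 : 0 < kap.
    rewrite /kap; apply: Rdiv_lt_0_compat.
      have := exp_pos (- al * (t * t)); move=> ?; apply: Rmult_lt_0_compat => //; nra.
    have : exp (- al * (t * t)) < exp (- al * (rho * rho)) by apply: exp_increasing; apply: neg_mul_lt => //; apply: sq_lt; lra.
    lra.
  set mk := v (ext x0 t) / 2 * kap.
  have mk0 : 0 < mk by rewrite /mk; apply: Rmult_lt_0_compat; lra.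
  have hlow : forall h, 0 < h -> h < t - rho -> mk * h <= v (ext x0 h).
    move=> h h0 ht.
    have hdist : dist (ext x0 h) (ext x0 t) = t - h by rewrite dist_ext_same Rabs_left; lra.
    have rth : rho < t - h by lra.
    have hb := @hopf_bound _ (ext x0 t) rho t (ext x0 h) h rp h0 rth hdist.
    have hd2 : rho < dist (ext x0 h) (ext x0 t) < t by rewrite hdist; lra.
    have := hann (ext x0 h) hd2.
    have : kap * h <= gb (ext x0 t) rho t (ext x0 h).
      move: hb; rewrite /kap -/al; apply: Rle_trans; right; field.
      have : exp (- al * (t * t)) < exp (- al * (rho * rho)) by apply: exp_increasing; apply: neg_mul_lt => //; apply: sq_lt; lra.
      lra.
    rewrite /mk; move=> hk hv2.
    have : v (ext x0 t) / 2 * (kap * h) <= v (ext x0 t) / 2 * gb (ext x0 t) rho t (ext x0 h).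
      apply: Rmult_le_compat_l; lra.
    lra.
  case: (hdl (mk / 2) ltac:(lra)) => del [del0 hdel].
  have trho : 0 < t - rho by lra.
  case: (small_pos del0 trho) => h [h0 [hd1 hd2]].
  have := hdel h (conj h0 hd1); rewrite hbot // ux0.
  move/rabs_lt => hq.
  have := hlow h h0 hd2.
  move=> hl.
  have : mk <= v (ext x0 h) / h.
    apply: (Rmult_le_reg_r h) => //; rewrite /Rdiv Rmult_assoc Rinv_l; lra.
  lra.
have stepQ : forall y rho0, 0 < rho0 -> (forall y', dist y' y < rho0 -> cyl H y') -> v y = 0 ->
    forall y', dist y' y < rho0 / 2 -> v y' = 0.
  move=> y rho0 rr hb vy y' hy'.
  have Cy' : cyl H y' by apply: hb; lra.
  case: (Rle_lt_or_eq_dec _ _ (hvpos _ (clos_self Cy'))) => h; last by [].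
  exfalso.
  have R0 : 0 < rho0 / 2 by lra.
  have hOm : forall w, dist w y' < rho0 / 2 -> cyl H w.
    move=> w hw; apply: hb; have := dist_tri w y' y; lra.
  have hC : forall w, dist w y' <= rho0 / 2 -> clos (cyl H) w.
    move=> w hw; apply: clos_self; apply: hb; have := dist_tri w y' y; lra.
  have hyy : dist y y' < rho0 / 2 by rewrite dist_sym.
  have := @propagate _ _ _ _ _ _ hlap hsum hcont hvpos y' (rho0 / 2) y R0 hOm hC h hyy.
  lra.
pose t := r0 / 4.
have t0 : 0 < t by rewrite /t; lra.
exists (r0 / 8); split; first lra.
move=> x hx.
have Hx : H x by apply: hr0; lra.
split => //.
have dsame : forall (a b : Rn n) l, dist (ext a l) (ext b l) = dist a b.
  move=> a b l; rewrite !dist_sqrt dist2_ext; f_equal; ring.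
have hvt : v (ext x t) = 0.
  have hb := ball_in_cyl hr0 (x := x0) (t := t) (s := t) t0 (Rle_refl t) ltac:(rewrite /t; lra).
  apply: (stepQ _ t t0 hb (step1 t t0 ltac:(rewrite /t; lra))).
  rewrite dsame dist_sym /t; lra.
have Qs : forall sg tau, 0 < sg -> sg <= t -> v (ext x sg) = 0 -> sg / 2 < tau <= sg -> v (ext x tau) = 0.
  move=> sg tau sg0 sgt hsg htau.
  have hb := ball_in_cyl hr0 (x := x) (t := sg) (s := sg) sg0 (Rle_refl sg) ltac:(rewrite /t in sgt; lra).
  apply: (stepQ _ sg sg0 hb hsg).
  rewrite dist_ext_same Rabs_left1; lra.
set q := 3 / 4.
have q01 : 0 < q < 1 by rewrite /q; lra.
have qp : forall k, 0 < q ^ k <= 1.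
  elim=> [|k [IH1 IH2]] /=; first by split; lra.
  split; nra.
have Pk : forall k tau, t * q ^ k.+1 <= tau <= t -> v (ext x tau) = 0.
  elim=> [|k IH] tau htau.
    case: (Rle_lt_or_eq_dec _ _ (proj2 htau)) => h; last by rewrite h.
    apply: (Qs t) => //; first lra.
    move: htau; rewrite /= /q Rmult_1_r; lra.
  case: (Rle_lt_dec (t * q ^ k.+1) tau) => h; first by apply: IH; lra.
  have [qa qb] := qp k.+1.
  have hs := IH (t * q ^ k.+1) ltac:(split; [lra|nra]).
  apply: (Qs (t * q ^ k.+1)) => //; [nra|nra|].
  have e1 : t * q ^ k.+2 = q * (t * q ^ k.+1) by simpl; ring.
  rewrite e1 in htau.
  split; last lra.
  have sp : 0 < t * q ^ k.+1 by nra.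
  have hq2 : 1 / 2 < q by rewrite /q; lra.
  nra.
have ztau : forall tau, 0 < tau <= t -> v (ext x tau) = 0.
  move=> tau [tau0 taut].
  have hq : Rabs q < 1 by rewrite /q Rabs_pos_eq; lra.
  case: (pow_lt_1_zero q hq (tau / t) ltac:(apply: Rdiv_lt_0_compat; lra)) => K hK.
  apply: (Pk K); split => //.
  have := hK K (le_n K); rewrite Rabs_pos_eq; last by have := qp K; lra.
  move=> h1.
  have h2 : t * q ^ K < tau.
    have := Rmult_lt_compat_l t _ _ t0 h1.
    have -> : t * (tau / t) = tau by field; lra.
    done.
  have [qa qb] := qp K.
  have : q ^ K.+1 = q * q ^ K by [].
  move=> ->; nra.
apply: NNPP => hne.
have hpos' : 0 < Rabs (u x) by apply: Rabs_pos_lt.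
have Cx : clos (cyl H) (ext x 0) by apply: clos_cyl_ext => //; lra.
case: (@hcont (ext x 0) Cx (Rabs (u x)) hpos') => dd [dd0 hdd].
case: (small_pos dd0 t0) => tau [tau0 [taud taut]].
have Ct : clos (cyl H) (ext x tau) by apply: clos_cyl_ext => //; lra.
have := hdd (ext x tau) Ct ltac:(rewrite dist_ext_same Rabs_left; lra).
rewrite ztau; last lra.
rewrite hbot // Rminus_0_l Rabs_Ropp; lra.
Qed.
End Main.

Theorem mainTheorem9 (n : nat) (H : Rn n -> Prop) (c u phi : Rn n -> R) :
  smooth_bounded_domain H ->
  (exists M, forall x, H x -> Rabs (c x) <= M) ->
  C2 H u ->
  cont_on (clos H) u ->
  (forall x, boundary H x -> phi x >= 0) ->
  (forall x, boundary H x -> u x = phi x) ->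
  (forall x, H x -> u x >= 0) ->
  (forall x, H x -> exists d, DN H phi u x d /\ d + c x * u x >= 0) ->
  (forall x, H x -> u x > 0) \/ (forall x, H x -> u x = 0).
Proof.
move=> [_ [hHo [hconn [hHb _]]]] _ _ hcont hphi _ hu hdn.
have hu' : forall x, H x -> 0 <= u x by move=> x Hx; apply: Rge_le; exact: hu.
have hphi' : forall x, boundary H x -> 0 <= phi x by move=> x bx; apply: Rge_le; exact: hphi.
have hcH : cont_on H u by apply: (cont_on_sub hcont) => x Hx; exact: clos_self.
have oP : is_open (fun x => H x /\ u x > 0).
  move=> x [Hx ux].
  case: (@hHo x Hx) => r1 [r10 hr1].
  case: (@hcH x Hx (u x) ux) => d [d0 hd].
  case: (small_pos r10 d0) => r [r0 [rr1 rd]].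
  exists r; split => // y hy.
  have Hy : H y by apply: hr1; lra.
  split => //; have := hd y Hy ltac:(lra); move/rabs_lt; lra.
have oZ : is_open (fun x => H x /\ u x = 0).
  move=> x [Hx ux].
  case: (Zopen hHo hHb hu' hphi' hdn Hx ux) => d [d0 hd].
  by exists d; split.
case: (hconn _ _ oP oZ).
- move=> x Hx; case: (Rle_lt_or_eq_dec _ _ (hu' x Hx)) => h; [left|right]; split => //.
- by move=> x _ [_ h1] [_ h2]; lra.
- by move=> h; left => x Hx; case: (h x Hx).
- by move=> h; right => x Hx; case: (h x Hx).
Qed.
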